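(* Let $\ell_1,\ldots,\ell_4$ be four distinct lines in $\mathbb{R}^2$ given by $L_i=0$, where $L_i=A_ix+B_iy+C_i$ (real coefficients, $(A_i,B_i)\neq(0,0)$), $i=1,\ldots,4$. Assume that no two of $\ell_1,\ell_2,\ell_3$ are parallel and that $\ell_4$ is parallel to neither $\ell_1$ nor $\ell_2$. Let $f(x,y)=L_1L_2L_3+L_4$ and let $\Gamma$ be the real algebraic cubic curve $f(x,y)=0$. Then $f$ is irreducible, and $\Gamma$ is asymptotic to each of the lines $\ell_1,\ell_2,\ell_3$. *)

(* Defs.v *)
From HB Require Import structures.
From mathcomp Require Import all_boot all_order all_algebra.
From mathcomp Require Import all_classical all_reals all_analysis.
Set Implicit Arguments. Unset Strict Implicit. Unset Printing Implicit Defensive.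
Import Order.TTheory GRing.Theory Num.Theory.
Import numFieldNormedType.Exports.
Local Open Scope ring_scope.
Local Open Scope classical_set_scope.

(* Bivariate polynomials R[x,y] are represented as {poly {poly R}}:
   the inner variable is x, the outer variable is y. *)
Definition eval2 {R : ringType} (p : {poly {poly R}}) (x y : R) : R :=
  (p.[y%:P]).[x].

Definition linpoly {R : ringType} (A B C : R) : {poly {poly R}} :=
  (B%:P)%:P * 'X + (A *: 'X + C%:P)%:P.

Definition const2 {R : ringType} (p : {poly {poly R}}) : Prop :=
  exists c : R, p = c%:P%:P.

(* Irreducibility in R[x,y]: non-constant (in particular nonzero, not a unit),
   and in every factorization one factor is constant (hence a unit). *)
Definition irreducible2 {R : ringType} (p : {poly {poly R}}) : Prop :=
  ~ const2 p /\ forall g h, p = g * h -> const2 g \/ const2 h.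

Definition line {R : ringType} (A B C : R) : set (R * R) :=
  [set p | A * p.1 + B * p.2 + C = 0].

Definition parallel {R : ringType} (A1 B1 A2 B2 : R) : Prop :=
  A1 * B2 = A2 * B1.

Definition dist_line {R : rcfType} (A B C x y : R) : R :=
  `|A * x + B * y + C| / Num.sqrt (A ^+ 2 + B ^+ 2).

(* The zero set {f = 0} is asymptotic to the line (A,B,C): there is a branch,
   i.e. a continuous curve t |-> (gx t, gy t) lying in {f = 0}, going to
   infinity as t -> +oo, whose distance to the line tends to 0. *)
Definition asymptotic_to_line {R : realType} (f : {poly {poly R}}) (A B C : R)
  : Prop :=
  exists gx gy : R -> R,
    continuous gx /\ continuous gy /\
    (forall t, eval2 f (gx t) (gy t) = 0) /\
    ((fun t => `|gx t| + `|gy t|) @ +oo --> +oo) /\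
    ((fun t => dist_line A B C (gx t) (gy t)) @ +oo --> 0).

(* Main.v *)
Require Import Defs.
From HB Require Import structures.
From mathcomp Require Import all_boot all_order all_algebra.
From mathcomp Require Import all_classical all_reals all_analysis.
From mathcomp Require Import ring lra zify.
Import Order.TTheory GRing.Theory Num.Theory.
Local Open Scope ring_scope.

Section Alg.
Context {R : realType}.

Lemma poly_inf_eq0 (D : idomainType) (p : {poly D}) (r : nat -> D) :
  injective r -> (forall n, root p (r n)) -> p = 0.
Proof.
move=> ri rt; apply: (@roots_geq_poly_eq0 _ p [seq r i | i <- iota 0 (size p)]).
- by apply/allP => z /mapP [i _ ->].
- by rewrite map_inj_uniq // iota_uniq.
- by rewrite size_map size_iota.
Qed.

Lemma eval2_eq0 (p : {poly {poly R}}) : (forall x y, eval2 p x y = 0) -> p = 0.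
Proof.
move=> H.
have Hy : forall y : R, p.[y%:P] = 0.
  move=> y; apply: (@poly_inf_eq0 _ _ (fun n => n%:R)).
    by move=> m n /eqP; rewrite eqr_nat => /eqP.
  by move=> n; rewrite /root; apply/eqP; apply: H.
apply: (@poly_inf_eq0 _ _ (fun n => (n%:R)%:P)).
  by move=> m n /polyC_inj /eqP; rewrite eqr_nat => /eqP.
by move=> n; rewrite /root Hy.
Qed.

Lemma eval2_ext (p q : {poly {poly R}}) :
  (forall x y, eval2 p x y = eval2 q x y) -> p = q.
Proof.
move=> H; apply/eqP; rewrite -subr_eq0; apply/eqP; apply: eval2_eq0 => x y.
by move: (H x y); rewrite /eval2 !hornerE => ->; rewrite subrr.
Qed.

Lemma eval2D (p q : {poly {poly R}}) x y :
  eval2 (p + q) x y = eval2 p x y + eval2 q x y.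
Proof. by rewrite /eval2 !hornerE. Qed.
Lemma eval2M (p q : {poly {poly R}}) x y :
  eval2 (p * q) x y = eval2 p x y * eval2 q x y.
Proof. by rewrite /eval2 !hornerM. Qed.
Lemma eval2C (c : R) (x y : R) : eval2 c%:P%:P x y = c.
Proof. by rewrite /eval2 !hornerC. Qed.
Lemma eval2_lin (A B C x y : R) : eval2 (linpoly A B C) x y = A * x + B * y + C.
Proof. rewrite /eval2 /linpoly !(hornerD,hornerM,hornerC,hornerX,hornerZ,hornerD,hornerC). ring. Qed.

Lemma horner_poly_pt (p : {poly {poly R}}) (q : {poly R}) x :
  (p.[q]).[x] = (p.[(q.[x])%:P]).[x].
Proof.
elim/poly_ind: p => [|p c IH]; first by rewrite !horner0.
by rewrite !(hornerE, hornerM) IH.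
Qed.

Lemma eval2_swap (p : {poly {poly R}}) x y : eval2 (swapXY p) x y = eval2 p y x.
Proof.
elim/poly_ind: p => [|p c IH]; first by rewrite raddf0 /eval2 !horner0.
rewrite rmorphD rmorphM /= swapXY_X swapXY_polyC !eval2D !eval2M IH.
congr (_ + _); last by rewrite /eval2 horner_map /= !hornerC.
by congr (_ * _); rewrite /eval2 !(hornerC, hornerX).
Qed.

Definition shear (l : R) (p : {poly {poly R}}) : {poly {poly R}} :=
  swapXY (p \Po ('X + (l *: 'X)%:P)).

Lemma eval2_shear (l : R) p (x y : R) : eval2 (shear l p) x y = eval2 p y (x + l * y).
Proof.
rewrite /shear eval2_swap /eval2 horner_comp horner_poly_pt.
by rewrite !hornerE.
Qed.

End Alg.

Section Core.
Context {R : realType}.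

Lemma size2_decomp (D : nzRingType) (q : {poly D}) : (size q <= 2)%N ->
  q = (q`_1)%:P * 'X + (q`_0)%:P.
Proof.
move=> sq; apply/polyP => i; rewrite coefD coefC coefCM coefX.
case: i => [|[|i]] /=; rewrite ?mulr0 ?mulr1 ?add0r ?addr0 //.
by apply/(leq_sizeP _ _ sq).
Qed.

Lemma size_lin (A B C : R) : B != 0 ->
  size (linpoly A B C) = 2 /\ lead_coef (linpoly A B C) = B%:P.
Proof.
move=> B0; have sX : size ((B%:P)%:P * 'X : {poly {poly R}}) = 2.
  by rewrite size_Cmul ?polyC_eq0 // size_polyX.
have sC : (size ((A *: 'X + C%:P)%:P : {poly {poly R}}) < 2)%N.
  exact: leq_ltn_trans (size_polyC_leq1 _) _.
rewrite /linpoly size_polyDl ?sX // lead_coefDl ?sX //.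
by rewrite lead_coefM lead_coefC lead_coefX mulr1.
Qed.

Lemma size_lin_le (A B C : R) : (size (linpoly A B C) <= 2)%N.
Proof.
rewrite /linpoly; apply: leq_trans (size_polyD _ _) _.
rewrite geq_max; apply/andP; split; last exact: leq_trans (size_polyC_leq1 _) _.
apply: leq_trans (size_mul_leq _ _) _; rewrite size_polyX addn2 /=.
exact: size_polyC_leq1.
Qed.

Lemma size_prod_const (a b : {poly R}) (c : R) : c != 0 -> a * b = c%:P ->
  size a = 1%N.
Proof.
move=> c0 E.
have a0 : a != 0 by apply: contra_neq c0 => a0; move: E; rewrite a0 mul0r => /esym/eqP; rewrite polyC_eq0 => /eqP.
have b0 : b != 0 by apply: contra_neq c0 => b0; move: E; rewrite b0 mulr0 => /esym/eqP; rewrite polyC_eq0 => /eqP.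
move: (congr1 (fun p : {poly R} => size p) E) => /=; rewrite size_mul // size_polyC c0.
move: a0 b0; rewrite -!size_poly_gt0 => h1 h2 h3; have h4 : ((size a + size b).-1 = 1)%N by exact: h3.
have h5 : (size a + size b = 2)%N by rewrite -[(size a + size b)%N]prednK ?h4 // addn_gt0 h1.
move: h1 h2 h5; set sa := size a; set sb := size b; lia.
Qed.


Lemma real_core (a1 b1 a2 b2 a3 b3 a4 b4 : R) :
  (a1 != 0) || (a2 != 0) -> (a1 != 0) || (a3 != 0) -> (a2 != 0) || (a3 != 0) ->
  a1*a2*a3 = 0 ->
  a1*a2*b3 + a1*b2*a3 + b1*a2*a3 = 0 ->
  a1*b2*b3 + b1*a2*b3 + b1*b2*a3 + a4 = 0 ->
  b1*b2*b3 + b4 = 0 ->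
  a4 = 0 /\ b4 = 0 /\
  ((a1 = 0 /\ b1 = 0) \/ (a2 = 0 /\ b2 = 0) \/ (a3 = 0 /\ b3 = 0)).
Proof.
move=> n12 n13 n23 H3 H2 H1 H0.
have [a10|a1n] := eqVneq a1 0.
  move: n12 n13; rewrite a10 eqxx /= => a2n a3n.
  have /eqP : b1 * (a2 * a3) = 0 by rewrite -H2 a10; ring.
  rewrite mulf_eq0 mulf_eq0 (negbTE a2n) (negbTE a3n) !orbF => /eqP b10.
  have a40 : a4 = 0 by rewrite -H1 a10 b10; ring.
  have b40 : b4 = 0 by rewrite -H0 b10; ring.
  by split => //; split => //; left.
have [a20|a2n] := eqVneq a2 0.
  move: n23; rewrite a20 eqxx /= => a3n.
  have /eqP : b2 * (a1 * a3) = 0 by rewrite -H2 a20; ring.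
  rewrite mulf_eq0 mulf_eq0 (negbTE a1n) (negbTE a3n) !orbF => /eqP b20.
  have a40 : a4 = 0 by rewrite -H1 a20 b20; ring.
  have b40 : b4 = 0 by rewrite -H0 b20; ring.
  by split => //; split => //; right; left.
have a30 : a3 = 0.
  by move/eqP: H3; rewrite mulf_eq0 mulf_eq0 (negbTE a1n) (negbTE a2n) => /eqP.
have /eqP : b3 * (a1 * a2) = 0 by rewrite -H2 a30; ring.
rewrite mulf_eq0 mulf_eq0 (negbTE a1n) (negbTE a2n) !orbF => /eqP b30.
have a40 : a4 = 0 by rewrite -H1 a30 b30; ring.
have b40 : b4 = 0 by rewrite -H0 b30; ring.
by split => //; split => //; right; right.
Qed.

Lemma size_lin1_le (A C : R) : (size ((A *: 'X + C%:P)%R : {poly R}) <= 2)%N.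
Proof.
apply: leq_trans (size_polyD _ _) _.
rewrite geq_max; apply/andP; split; last exact: leq_trans (size_polyC_leq1 _) _.
by apply: leq_trans (size_scale_leq _ _) _; rewrite size_polyX.
Qed.

Lemma coef_cubic (c3 c2 c1 c0 : R) :
  let P := c3%:P * 'X^3 + c2%:P * 'X^2 + c1%:P * 'X + c0%:P : {poly R} in
  P`_3 = c3 /\ P`_2 = c2 /\ P`_1 = c1 /\ P`_0 = c0.
Proof.
by rewrite /= !coefD !coefCM !coefXn !coefX !coefC /=; rewrite !(mulr0, mulr1, addr0, add0r).
Qed.


Section CoreF.
Variables A1 B1 C1 A2 B2 C2 A3 B3 C3 A4 B4 C4 : R.
Hypotheses (hB1 : B1 != 0) (hB2 : B2 != 0) (hB3 : B3 != 0).
Hypotheses (np12 : A1 * B2 != A2 * B1) (np13 : A1 * B3 != A3 * B1)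
  (np23 : A2 * B3 != A3 * B2).
Hypotheses (nop1 : forall k, ~ (A4 = k * A1 /\ B4 = k * B1 /\ C4 = k * C1))
  (nop2 : forall k, ~ (A4 = k * A2 /\ B4 = k * B2 /\ C4 = k * C2))
  (nop3 : forall k, ~ (A4 = k * A3 /\ B4 = k * B3 /\ C4 = k * C3)).

Let f := linpoly A1 B1 C1 * linpoly A2 B2 C2 * linpoly A3 B3 C3
           + linpoly A4 B4 C4.

Lemma nop_gen (A B C m n : R) : B != 0 ->
  A + B * m = 0 -> B * n + C = 0 -> A4 + B4 * m = 0 -> B4 * n + C4 = 0 ->
  A4 = (B4 / B) * A /\ B4 = (B4 / B) * B /\ C4 = (B4 / B) * C.
Proof.
move=> hB e1 e2 e3 e4.
have -> : A = - (B * m) by lra.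
have -> : C = - (B * n) by lra.
have -> : A4 = - (B4 * m) by lra.
have -> : C4 = - (B4 * n) by lra.
by split; [|split]; field.
Qed.

Lemma f_eval (phi : {poly R}) : f.[phi] =
  (B1%:P * phi + (A1 *: 'X + C1%:P)) * (B2%:P * phi + (A2 *: 'X + C2%:P))
  * (B3%:P * phi + (A3 *: 'X + C3%:P)) + (B4%:P * phi + (A4 *: 'X + C4%:P)).
Proof. by rewrite /f /linpoly !(hornerD, hornerM, hornerC, hornerX). Qed.

Lemma no_root (phi : {poly R}) : f.[phi] != 0.
Proof.
rewrite f_eval.
have [big|small] := leqP 3 (size phi).
  have phi0 : phi != 0 by rewrite -size_poly_gt0; apply: leq_trans big.
  have sP : forall A B C : R, B != 0 ->
      size (B%:P * phi + (A *: 'X + C%:P)) = size phi.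
    move=> A B C hB; rewrite size_polyDl size_Cmul //.
    by apply: leq_ltn_trans (size_lin1_le _ _) _.
  have nz : forall A B C : R, B != 0 -> B%:P * phi + (A *: 'X + C%:P) != 0.
    by move=> A B C hB; rewrite -size_poly_gt0 sP //; apply: leq_trans big.
  set P1 := B1%:P * phi + _; set P2 := B2%:P * phi + _.
  set P3 := B3%:P * phi + _; set P4 := B4%:P * phi + _.
  have s123 : size (P1 * P2 * P3) = ((size phi).*2 + size phi - 2)%N.
    rewrite !size_mul ?mulf_neq0 ?nz // !sP //.
    move: big; set s := size phi; lia.
  have s4 : (size P4 <= size phi)%N.
    apply: leq_trans (size_polyD _ _) _; rewrite geq_max; apply/andP; split.
      apply: leq_trans (size_mul_leq _ _) _.
      move: (size_polyC_leq1 B4); set s := size phi; set t := size _; lia.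
    by apply: leq_trans (size_lin1_le _ _) _; apply: leq_trans big.
  rewrite -size_poly_gt0 size_polyDl s123.
    move: big; set s := size phi; lia.
  move: big s4; set s := size phi; set t := size P4; lia.
rewrite (@size2_decomp _ phi); last by move: small; set s := size phi; lia.
set m := phi`_1; set n := phi`_0.
have E : forall A B C : R, B%:P * (m%:P * 'X + n%:P) + (A *: 'X + C%:P) =
    (A + B * m)%:P * 'X + (B * n + C)%:P.
  by move=> A B C; rewrite -mul_polyC !(polyCD, polyCM); ring.
rewrite !E.
set a1 := A1 + B1 * m; set a2 := A2 + B2 * m; set a3 := A3 + B3 * m;
set a4 := A4 + B4 * m.
set b1 := B1 * n + C1; set b2 := B2 * n + C2; set b3 := B3 * n + C3;
set b4 := B4 * n + C4.
have -> : (a1%:P * 'X + b1%:P) * (a2%:P * 'X + b2%:P) * (a3%:P * 'X + b3%:P)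
   + (a4%:P * 'X + b4%:P) =
   (a1*a2*a3)%:P * 'X^3 + (a1*a2*b3 + a1*b2*a3 + b1*a2*a3)%:P * 'X^2
   + (a1*b2*b3 + b1*a2*b3 + b1*b2*a3 + a4)%:P * 'X
   + (b1*b2*b3 + b4)%:P.
  by rewrite !(polyCD, polyCM); ring.
apply/eqP => H.
have := coef_cubic (a1*a2*a3) (a1*a2*b3 + a1*b2*a3 + b1*a2*a3)
   (a1*b2*b3 + b1*a2*b3 + b1*b2*a3 + a4) (b1*b2*b3 + b4).
rewrite /= H !coef0 => -[h3 [h2 [h1 h0]]].
have pp : forall (Ai Bi Aj Bj : R), Ai * Bj != Aj * Bi ->
    (Ai + Bi * m != 0) || (Aj + Bj * m != 0).
  move=> Ai Bi Aj Bj hn; apply: contraR hn; rewrite negb_or !negbK.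
  move=> /andP [/eqP e1 /eqP e2]; apply/eqP.
  have -> : Ai = - (Bi * m) by lra.
  have -> : Aj = - (Bj * m) by lra.
  ring.
have [a40 [b40 Hi]] := @real_core a1 b1 a2 b2 a3 b3 a4 b4 (pp _ _ _ _ np12) (pp _ _ _ _ np13)
   (pp _ _ _ _ np23) (esym h3) (esym h2) (esym h1) (esym h0).
case: Hi => [[e1 e2]|[[e1 e2]|[e1 e2]]].
- by apply: (nop1 (B4 / B1)); apply: nop_gen e1 e2 a40 b40.
- by apply: (nop2 (B4 / B2)); apply: nop_gen e1 e2 a40 b40.
- by apply: (nop3 (B4 / B3)); apply: nop_gen e1 e2 a40 b40.
Qed.


Lemma lin_factor (q k : {poly {poly R}}) : f = q * k -> size q = 2%N ->
  size (lead_coef q) = 1%N -> False.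
Proof.
move=> fE sq slq.
have qE := @size2_decomp _ q (eq_leq sq).
have l1 : lead_coef q = q`_1 by rewrite lead_coefE sq.
move: slq; rewrite l1 => /eqP /size_poly1P [c c0 qc].
set q0 := q`_0 in qE *.
have : f.[- (c^-1 *: q0)] = 0.
  rewrite fE hornerM qE qc !(hornerD, hornerM, hornerC, hornerX).
  rewrite -mul_polyC mulrN mulrA -polyCM mulfV // mul1r addrC subrr.
  by rewrite mul0r.
by move/eqP; rewrite (negbTE (no_root _)).
Qed.

Lemma const_of_size (g : {poly {poly R}}) : size g = 1%N ->
  size (lead_coef g) = 1%N -> const2 g.
Proof.
move=> /eqP /size_poly1P [a a0 ->]; rewrite lead_coefC => /eqP /size_poly1P [c c0 ->].
by exists c.
Qed.

Lemma core_irr : irreducible2 f.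
Proof.
have [s1 l1] := @size_lin A1 B1 C1 hB1.
have [s2 l2] := @size_lin A2 B2 C2 hB2.
have [s3 l3] := @size_lin A3 B3 C3 hB3.
have nz : forall p : {poly {poly R}}, size p = 2%N -> p != 0.
  by move=> p sp; rewrite -size_poly_gt0 sp.
have s123 : size (linpoly A1 B1 C1 * linpoly A2 B2 C2 * linpoly A3 B3 C3) = 4%N.
  by rewrite !size_mul ?mulf_neq0 ?nz // s1 s2 s3.
have s4 := size_lin_le A4 B4 C4.
have sf : size f = 4%N by rewrite /f size_polyDl s123 //; apply: leq_ltn_trans s4 _.
have lf : lead_coef f = (B1 * B2 * B3)%:P.
  by rewrite /f lead_coefDl ?s123 ?(leq_ltn_trans s4) // !lead_coefM l1 l2 l3 !polyCM.
split.
  move=> [c fc]; move: sf; rewrite fc.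
  by move: (size_polyC_leq1 (c%:P)); set t := size _; lia.
move=> g h fgh.
have f0 : f != 0 by rewrite -size_poly_gt0 sf.
have g0 : g != 0 by apply: contra_neq f0 => g0; rewrite fgh g0 mul0r.
have h0 : h != 0 by apply: contra_neq f0 => h0; rewrite fgh h0 mulr0.
have sgh : (size g + size h = 5)%N.
  move: sf; rewrite fgh size_mul //.
  move: g0 h0; rewrite -!size_poly_gt0; set a := size g; set b := size h.
  move=> ha hb e; rewrite -[(a + b)%N]prednK ?e //; lia.
have B0 : B1 * B2 * B3 != 0 by rewrite !mulf_neq0.
have lgh : lead_coef g * lead_coef h = (B1 * B2 * B3)%:P by rewrite -lead_coefM -fgh.
have slg := @size_prod_const _ _ _ B0 lgh.
have slh : size (lead_coef h) = 1%N by apply: (@size_prod_const (lead_coef h) (lead_coef g) _ B0); rewrite mulrC.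
move: g0 h0; rewrite -!size_poly_gt0 => g0 h0.
have [eg|ng] := eqVneq (size g) 1%N; first by left; apply: const_of_size.
have [eh|nh] := eqVneq (size h) 1%N; first by right; apply: const_of_size.
have [e2|n2] := eqVneq (size g) 2%N; first by case: (@lin_factor g h fgh e2 slg).
have e2 : size h = 2%N.
  move: ng nh n2 sgh g0 h0; set a := size g; set b := size h.
  move=> /eqP ? /eqP ? /eqP ? ? ? ?; lia.
by case: (@lin_factor h g _ e2 slh); rewrite fgh mulrC.
Qed.

End CoreF.
End Core.

Section Irr.
Variable R : realType.

Lemma shear_lin (l A B C : R) : shear l (linpoly A B C) = linpoly B (A + B * l) C.
Proof. apply: eval2_ext => x y; rewrite eval2_shear !eval2_lin; ring. Qed.

Lemma shear_mul (l : R) g h : shear l (g * h) = shear l g * shear l h.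
Proof. by apply: eval2_ext => x y; rewrite eval2M !eval2_shear eval2M. Qed.

Lemma shear_add (l : R) g h : shear l (g + h) = shear l g + shear l h.
Proof. by apply: eval2_ext => x y; rewrite eval2D !eval2_shear eval2D. Qed.

Lemma shear_C (l c : R) : shear l c%:P%:P = c%:P%:P.
Proof. by apply: eval2_ext => x y; rewrite eval2_shear !eval2C. Qed.

Lemma shear_const (l : R) g : const2 (shear l g) -> const2 g.
Proof.
move=> [c gc]; exists c; apply: eval2_ext => a b.
have := congr1 (fun p => eval2 p (b - l * a) a) gc.
by rewrite /= eval2_shear eval2C subrK => ->; rewrite eval2C.
Qed.

Lemma line_eq_prop (Ai Bi Ci A4 B4 C4 k : R) : k != 0 ->
  A4 = k * Ai -> B4 = k * Bi -> C4 = k * Ci -> line Ai Bi Ci = line A4 B4 C4.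
Proof.
move=> k0 e1 e2 e3; rewrite /line; apply/seteqP; split => p /= H.
  have H2 : k * (Ai * p.1 + Bi * p.2 + Ci) = 0 by rewrite H mulr0.
  by rewrite e1 e2 e3 -H2; ring.
have : k * (Ai * p.1 + Bi * p.2 + Ci) = 0 by rewrite -H e1 e2 e3; ring.
by move/eqP; rewrite mulf_eq0 (negbTE k0) /= => /eqP.
Qed.

Lemma irr_main (A1 B1 C1 A2 B2 C2 A3 B3 C3 A4 B4 C4 : R)
  (nz1 : (A1, B1) != (0, 0)) (nz2 : (A2, B2) != (0, 0))
  (nz3 : (A3, B3) != (0, 0)) (nz4 : (A4, B4) != (0, 0))
  (d14 : line A1 B1 C1 <> line A4 B4 C4)
  (d24 : line A2 B2 C2 <> line A4 B4 C4) (d34 : line A3 B3 C3 <> line A4 B4 C4)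
  (np12 : ~ parallel A1 B1 A2 B2) (np13 : ~ parallel A1 B1 A3 B3)
  (np23 : ~ parallel A2 B2 A3 B3) :
  irreducible2 (linpoly A1 B1 C1 * linpoly A2 B2 C2 * linpoly A3 B3 C3
           + linpoly A4 B4 C4).
Proof.
set l := 1 + `|A1 / B1| + `|A2 / B2| + `|A3 / B3|.
have hl : forall A B, (A, B) != (0, 0) -> `|A / B| < l -> A + B * l != 0.
  move=> A B nz lt; apply/eqP => e.
  have [B0|B0] := eqVneq B 0.
    by move: nz e; rewrite B0 xpair_eqE eqxx andbT mul0r addr0 => nA eA; rewrite eA eqxx in nA.
  have el : l = - (A / B) by rewrite -[l](mulKf B0) -[B * l](addKr A) e addr0; field.
  move: lt; rewrite el; have := ler_norm (- (A / B)); rewrite normrN.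
  by move=> h1 h2; have := le_lt_trans h1 h2; rewrite ltxx.
have n1 : `|A1 / B1| < l by rewrite /l; have := normr_ge0 (A2/B2); have := normr_ge0 (A3/B3); lra.
have n2 : `|A2 / B2| < l by rewrite /l; have := normr_ge0 (A1/B1); have := normr_ge0 (A3/B3); lra.
have n3 : `|A3 / B3| < l by rewrite /l; have := normr_ge0 (A2/B2); have := normr_ge0 (A1/B1); lra.
have npar : forall Ai Bi Aj Bj, ~ parallel Ai Bi Aj Bj ->
    Bi * (Aj + Bj * l) != Bj * (Ai + Bi * l).
  move=> Ai Bi Aj Bj np; apply/eqP => e; apply: np; rewrite /parallel.
  by apply/eqP; rewrite -subr_eq0; apply/eqP;
    rewrite -[LHS]opprK -[RHS]oppr0; congr (- _); rewrite -[0](subrr (Bi * (Aj + Bj * l))) {2}e; ring.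
have nop : forall Ai Bi Ci, line Ai Bi Ci <> line A4 B4 C4 -> forall k,
    ~ (B4 = k * Bi /\ A4 + B4 * l = k * (Ai + Bi * l) /\ C4 = k * Ci).
  move=> Ai Bi Ci d k [e1 [e2 e3]]; apply: d.
  have e4 : A4 = k * Ai by rewrite -[A4](addrK (B4 * l)) e2 e1; ring.
  have k0 : k != 0.
    by apply: contra_neq nz4 => k0; rewrite e4 e1 k0 !mul0r.
  exact: line_eq_prop k0 e4 e1 e3.
have := @core_irr _ _ _ _ _ _ _ _ _ _ _ _ _ (hl _ _ nz1 n1) (hl _ _ nz2 n2) (hl _ _ nz3 n3)
  (npar _ _ _ _ np12) (npar _ _ _ _ np13) (npar _ _ _ _ np23)
  (nop _ _ _ d14) (nop _ _ _ d24) (nop _ _ _ d34).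
rewrite -!shear_lin -!shear_mul -shear_add.
set F := _ + _ => -[nc irr]; split.
  by move=> [c Fc]; apply: nc; exists c; rewrite Fc shear_C.
move=> g h Fgh.
by case: (irr (shear l g) (shear l h)); rewrite ?Fgh ?shear_mul //;
  move/shear_const; [left|right].
Qed.

End Irr.

Section Quad.
Context {R : realType}.
Import numFieldNormedType.Exports.
Local Open Scope classical_set_scope.
Variables a b c d e g : R.
Hypothesis hb : 0 < b.

Let Pb : {poly R} := b *: 'X^2 + c *: 'X + d%:P.
Let Pd : {poly R} := Pb ^+ 2 - (4 * a)%:P * 'X * (e *: 'X + g%:P).
Let Pn : {poly R} := (-2 * e) *: 'X + (-2 * g)%:P.

Lemma hPb s : Pb.[s] = b * s ^+ 2 + c * s + d.
Proof. by rewrite /Pb !(hornerD, hornerZ, hornerXn, hornerX, hornerC). Qed.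
Lemma hPd s : Pd.[s] = (b * s ^+ 2 + c * s + d) ^+ 2 - 4 * (a * s) * (e * s + g).
Proof.
rewrite /Pd !(hornerD, hornerN, hornerM, horner_exp, hornerXn, hornerZ, hornerX, hornerC).
ring.
Qed.
Lemma hPn s : Pn.[s] = - 2 * (e * s + g).
Proof. rewrite /Pn !(hornerD, hornerZ, hornerX, hornerC); ring. Qed.

Definition T0 : R := 1 + 2 * (`|c| + `|d|) / b + 16 * `|a| * (`|e| + `|g|) / b ^+ 2.

Definition u0 (s : R) : R := Pn.[s] / (Pb.[s] + Num.sqrt Pd.[s]).

Lemma T0_ge1 : 1 <= T0.
Proof.
rewrite /T0.
have h1 : 0 <= 2 * (`|c| + `|d|) / b.
  apply: divr_ge0; last exact: ltW.
  by apply: mulr_ge0 => //; apply: addr_ge0; exact: normr_ge0.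
have h2 : 0 <= 16 * `|a| * (`|e| + `|g|) / b ^+ 2.
  apply: divr_ge0; last by rewrite exprn_ge0 // ltW.
  apply: mulr_ge0; first by apply: mulr_ge0 => //; lra.
  by apply: addr_ge0; exact: normr_ge0.
lra.
Qed.

Lemma nabs (x : R) : - `|x| <= x.
Proof. by have := ler_norm (- x); rewrite normrN lerNl. Qed.

Section AtS.
Variable s : R.
Hypothesis hs : T0 <= s.

Lemma s_ge1 : 1 <= s.
Proof. exact: le_trans T0_ge1 hs. Qed.

Lemma sb1 : 2 * (`|c| + `|d|) <= s * b.
Proof.
have h : 2 * (`|c| + `|d|) / b <= s.
  move: hs; rewrite /T0.
  have h2 : 0 <= 16 * `|a| * (`|e| + `|g|) / b ^+ 2.
    apply: divr_ge0; last by rewrite exprn_ge0 // ltW.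
    apply: mulr_ge0; first by apply: mulr_ge0 => //; lra.
    by apply: addr_ge0; exact: normr_ge0.
  lra.
by rewrite -ler_pdivrMr.
Qed.

Lemma sb2 : 16 * `|a| * (`|e| + `|g|) <= s * b ^+ 2.
Proof.
have hb2 : 0 < b ^+ 2 by rewrite exprn_gt0.
have h : 16 * `|a| * (`|e| + `|g|) / b ^+ 2 <= s.
  move: hs; rewrite /T0.
  have h1 : 0 <= 2 * (`|c| + `|d|) / b.
  apply: divr_ge0; last exact: ltW.
    by apply: mulr_ge0 => //; apply: addr_ge0; exact: normr_ge0.
  lra.
by rewrite -ler_pdivrMr.
Qed.

Lemma Pb_ge : b * s ^+ 2 / 2 <= Pb.[s].
Proof.
rewrite hPb.
have s1 := s_ge1; have h1 := sb1.
have hc : - (`|c| * s) <= c * s.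
  have h := nabs c; have : - `|c| * s <= c * s by rewrite ler_wpM2r //; lra.
  by rewrite mulNr.
have hd := nabs d.
have hd1 : `|d| <= `|d| * s by rewrite ler_peMr //; exact: normr_ge0.
have : (`|c| + `|d|) * s <= b * s ^+ 2 / 2.
  have : 2 * (`|c| + `|d|) * s <= s * b * s by rewrite ler_wpM2r //; lra.
  move=> h; rewrite expr2; lra.
lra.
Qed.


Lemma s_ge0 : 0 <= s.
Proof. by have := s_ge1; lra. Qed.

Lemma Pd_ge0 : 0 <= Pd.[s].
Proof.
rewrite hPd -hPb.
have s0 := s_ge0; have s1 := s_ge1.
set K := `|a| * (`|e| + `|g|).
have K0 : 0 <= K by apply: mulr_ge0; [exact: normr_ge0|apply: addr_ge0; exact: normr_ge0].
have e1 : `|e * s + g| <= `|e| * s + `|g|.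
  by apply: le_trans (ler_normD _ _) _; rewrite normrM (ger0_norm s0).
have e2 : a * s * (e * s + g) <= K * s ^+ 2.
  apply: le_trans (ler_norm _) _; rewrite !normrM (ger0_norm s0).
  have : `|a| * s * `|e * s + g| <= `|a| * s * (`|e| * s + `|g|).
    by apply: ler_wpM2l => //; apply: mulr_ge0 => //; exact: normr_ge0.
  move=> h; apply: le_trans h _.
  have hg : `|g| <= `|g| * s by rewrite ler_peMr //; exact: normr_ge0.
  have : `|a| * s * (`|e| * s + `|g|) <= `|a| * s * (`|e| * s + `|g| * s).
    apply: ler_wpM2l; first by apply: mulr_ge0 => //; exact: normr_ge0.
    by rewrite lerD2l.
  move=> h2; apply: le_trans h2 _; rewrite /K expr2 le_eqVlt; apply/orP; left.
  by apply/eqP; ring.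
have e3 : 16 * K <= b ^+ 2 * s ^+ 2.
  have := sb2; rewrite /K => h; apply: le_trans (_ : _ <= s * b ^+ 2) _.
    by rewrite mulrA.
  rewrite mulrC; apply: ler_wpM2l; first by apply: exprn_ge0; exact: ltW.
  by rewrite expr2; apply: ler_peMr.
have e4 : (b * s ^+ 2 / 2) ^+ 2 <= Pb.[s] ^+ 2.
  have h := Pb_ge; have h0 : 0 <= b * s ^+ 2 / 2.
    by apply: divr_ge0 => //; apply: mulr_ge0; [exact: ltW|exact: exprn_ge0].
  by rewrite lerXn2r // ?nnegrE // (le_trans h0 h).
have e5 : (b * s ^+ 2 / 2) ^+ 2 - 4 * (K * s ^+ 2) = s ^+ 2 * (b ^+ 2 * s ^+ 2 - 16 * K) / 4.
  by field.
have e6 : 0 <= s ^+ 2 * (b ^+ 2 * s ^+ 2 - 16 * K) / 4.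
  apply: divr_ge0 => //; apply: mulr_ge0; first exact: exprn_ge0.
  by rewrite subr_ge0.
have e7 : 4 * (a * s) * (e * s + g) = 4 * (a * s * (e * s + g)) by ring.
rewrite e7; lra.
Qed.

Lemma den_pos : 0 < Pb.[s] + Num.sqrt Pd.[s].
Proof.
have h := Pb_ge; have s1 := s_ge1.
have h0 : 0 < b * s ^+ 2 / 2.
  by apply: divr_gt0 => //; apply: mulr_gt0 => //; apply: exprn_gt0; lra.
have := sqrtr_ge0 Pd.[s]; lra.
Qed.

Lemma u0_root : a * s * u0 s ^+ 2 + Pb.[s] * u0 s + (e * s + g) = 0.
Proof.
have dp := den_pos; have dn : Pb.[s] + Num.sqrt Pd.[s] != 0 by rewrite gt_eqF.
have hsq := sqr_sqrtr Pd_ge0.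
rewrite /u0 hPn; move: hsq dn; rewrite hPd -hPb.
set q := Num.sqrt _; set P := Pb.[s] => hsq dn.
have -> : a * s * (-2 * (e * s + g) / (P + q)) ^+ 2 +
   P * (-2 * (e * s + g) / (P + q)) + (e * s + g) =
   (e * s + g) * (4 * (a * s) * (e * s + g) - P ^+ 2 + q ^+ 2) / (P + q) ^+ 2.
  by field.
by rewrite hsq; rewrite [X in X / _](_ : _ = 0) ?mul0r //; ring.
Qed.

Lemma u0_bound : `|u0 s| * (b * s) <= 4 * (`|e| + `|g|).
Proof.
have dp := den_pos; have h := Pb_ge; have s1 := s_ge1; have s0 := s_ge0.
have h1 : `|u0 s| * (Pb.[s] + Num.sqrt Pd.[s]) = 2 * `|e * s + g|.
  rewrite /u0 hPn normrM normfV (gtr0_norm dp) normrM normrN normr_nat.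
  by rewrite divfK // gt_eqF.
have e1 : `|e * s + g| <= (`|e| + `|g|) * s.
  apply: le_trans (ler_normD _ _) _; rewrite normrM (ger0_norm s0) mulrDl lerD2l.
  by rewrite ler_peMr //; exact: normr_ge0.
have h2 : `|u0 s| * (b * s ^+ 2 / 2) <= `|u0 s| * (Pb.[s] + Num.sqrt Pd.[s]).
  apply: ler_wpM2l; first exact: normr_ge0.
  by have := sqrtr_ge0 Pd.[s]; lra.
have h3 : `|u0 s| * (b * s) * s <= 4 * (`|e| + `|g|) * s.
  have -> : `|u0 s| * (b * s) * s = 2 * (`|u0 s| * (b * s ^+ 2 / 2)) by rewrite expr2; field.
  have -> : 4 * (`|e| + `|g|) * s = 2 * (2 * ((`|e| + `|g|) * s)) by ring.
  rewrite ler_pM2l //; apply: le_trans h2 _; rewrite h1 ler_pM2l //.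
have sp : 0 < s by lra.
by rewrite -(ler_pM2r sp).
Qed.

End AtS.

Definition uq (t : R) : R := u0 (Num.max t T0).

Lemma le_maxT t : T0 <= Num.max t T0.
Proof. by rewrite le_max lexx orbT. Qed.

Lemma uq_cont : continuous uq.
Proof.
move=> t.
have cm : {for t, continuous (fun t => Num.max t T0)}.
  by apply: continuous_max => //; exact: cst_continuous.
apply: (continuous_comp cm).
have dn : Pb.[Num.max t T0] + Num.sqrt Pd.[Num.max t T0] != 0.
  by rewrite gt_eqF // den_pos // le_maxT.
rewrite /u0.
apply: continuousM; first exact: continuous_horner.
apply: continuousV => //.
apply: continuousD; first exact: continuous_horner.
apply: (continuous_comp (f := horner Pd)); first exact: continuous_horner.
exact: sqrt_continuous.
Qed.

Lemma uq_root t : let s := Num.max t T0 in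
  a * s * uq t ^+ 2 + (b * s ^+ 2 + c * s + d) * uq t + (e * s + g) = 0.
Proof. by move=> s; rewrite -hPb; apply: u0_root; exact: le_maxT. Qed.

Lemma uq_cvg : uq x @[x --> +oo] --> 0.
Proof.
apply/cvgr0Pnorm_lt => eps eps0.
set M := Num.max T0 (4 * (`|e| + `|g|) / (b * eps) + 1).
exists M; split; first exact: num_real.
move=> t hM.
have hT : T0 < t by apply: le_lt_trans hM; rewrite le_max lexx.
have h2 : 4 * (`|e| + `|g|) / (b * eps) < t.
  apply: lt_trans hM; rewrite lt_max; apply/orP; right; lra.
have mt : Num.max t T0 = t by apply/max_idPl; exact: ltW.
rewrite /uq mt.
have hb0 := @u0_bound t (ltW hT).
have tp : 0 < t by have := T0_ge1; lra.
have be : 0 < b * eps by apply: mulr_gt0.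
have h3 : 4 * (`|e| + `|g|) < t * (b * eps) by rewrite -ltr_pdivrMr.
have h4 : `|u0 t| * (b * t) < eps * (b * t).
  apply: le_lt_trans hb0 _; rewrite (_ : eps * (b * t) = t * (b * eps)) //; ring.
by rewrite -(ltr_pM2r (_ : 0 < b * t)) // mulr_gt0.
Qed.

End Quad.

Section Branch.
Context {R : realType}.
Import numFieldNormedType.Exports.
Local Open Scope classical_set_scope.

Lemma cont_lin (u v : R -> R) (p q r s k : R) : continuous u -> continuous v ->
  continuous (fun t => (p * (u t - q) - r * (v t - s)) / k).
Proof.
move=> cu cv t.
have h1 : {for t, continuous (fun t => p * (u t - q))}.
  exact: (continuousM (@cst_continuous R R p t) (continuousD (cu t) (@cst_continuous R R (-q) t))).
have h2 : {for t, continuous (fun t => - (r * (v t - s)))}.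
  exact: (continuousN (continuousM (@cst_continuous R R r t) (continuousD (cv t) (@cst_continuous R R (-s) t)))).
exact: (continuousM (continuousD h1 h2) (@cst_continuous R R k^-1 t)).
Qed.

Lemma max_cont (T : R) : continuous (fun t : R => Num.max t T).
Proof. move=> t; apply: continuous_max => //; exact: cst_continuous. Qed.

Lemma branch_pos (A B C A' B' C' a b c d e g : R) (F : {poly {poly R}}) :
  A * B' != A' * B -> 0 < b ->
  (forall x y, (A*x+B*y+C)*(A'*x+B'*y+C')*(a*(A*x+B*y+C)+b*(A'*x+B'*y+C')+c)
      + d*(A*x+B*y+C) + e*(A'*x+B'*y+C') + g = 0 -> eval2 F x y = 0) ->
  asymptotic_to_line F A B C.
Proof.
move=> hD hb hF.
have D0 : A * B' - A' * B != 0 by rewrite subr_eq0.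
set T := T0 a b c d e g.
set tau := fun t : R => Num.max t T.
set u := uq a b c d e g.
set gx := fun t => (B' * (u t - C) - B * (tau t - C')) / (A * B' - A' * B).
set gy := fun t => (A * (tau t - C') - A' * (u t - C)) / (A * B' - A' * B).
have iU : forall t, A * gx t + B * gy t + C = u t.
  by move=> t; rewrite /gx /gy; field.
have iV : forall t, A' * gx t + B' * gy t + C' = tau t.
  by move=> t; rewrite /gx /gy; field.
have ctau : continuous tau.
  exact: max_cont.
have cu : continuous u := @uq_cont R a b c d e g hb.
exists gx, gy; split; first exact: cont_lin.
split; first exact: cont_lin.
split.
  move=> t; apply: hF; rewrite iU iV.
  have := @uq_root R a b c d e g hb t; rewrite -/T -/u => <-; rewrite /tau; ring.
split.
  apply/cvgryPge => M.
  set K := `|A'| + `|B'| + 1.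
  have K0 : 0 < K by rewrite /K; have := normr_ge0 A'; have := normr_ge0 B'; lra.
  exists (K * `|M| + `|C'|); split; first exact: num_real.
  move=> t ht.
  have tt : t <= tau t by rewrite /tau le_max lexx.
  have e1 : tau t <= K * (`|gx t| + `|gy t|) + `|C'|.
    rewrite -iV.
    have a1 : A' * gx t <= K * `|gx t|.
      apply: le_trans (ler_norm _) _; rewrite normrM; apply: ler_wpM2r.
        exact: normr_ge0.
      by rewrite /K; have := normr_ge0 B'; lra.
    have a2 : B' * gy t <= K * `|gy t|.
      apply: le_trans (ler_norm _) _; rewrite normrM; apply: ler_wpM2r.
        exact: normr_ge0.
      by rewrite /K; have := normr_ge0 A'; lra.
    have a3 := ler_norm C'.
    rewrite mulrDr; lra.
  have e2 : K * M <= K * `|M| by rewrite ler_pM2l // ler_norm.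
  have e3 : K * M <= K * (`|gx t| + `|gy t|) by lra.
  by rewrite -(ler_pM2l K0).
have -> : (fun t => dist_line A B C (gx t) (gy t)) =
    (fun t => `|u t| * (Num.sqrt (A ^+ 2 + B ^+ 2))^-1).
  by apply/funext => t; rewrite /dist_line iU.
rewrite -[X in _ --> X](mul0r (Num.sqrt (A ^+ 2 + B ^+ 2))^-1) -(@normr0 _ R).
apply: cvgMr_tmp; apply: cvg_norm; exact: (@uq_cvg R a b c d e g hb).
Qed.

End Branch.

Section Fin.
Import numFieldNormedType.Exports.

Lemma branch {R : realType} (A B C A' B' C' a b c d e g : R) (F : {poly {poly R}}) :
  A * B' != A' * B -> b != 0 ->
  (forall x y, (A*x+B*y+C)*(A'*x+B'*y+C')*(a*(A*x+B*y+C)+b*(A'*x+B'*y+C')+c)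
      + d*(A*x+B*y+C) + e*(A'*x+B'*y+C') + g = 0 -> eval2 F x y = 0) ->
  asymptotic_to_line F A B C.
Proof.
move=> hD b0 hF.
have [bn|bp] := ltP b 0; last first.
  by apply: (@branch_pos R A B C A' B' C' a b c d e g F hD _ hF); rewrite lt_neqAle eq_sym b0.
apply: (@branch_pos R A B C A' B' C' (-a) (-b) (-c) (-d) (-e) (-g) F hD); first by rewrite oppr_gt0.
move=> x y E; apply: hF; rewrite -[LHS]opprK -[RHS]oppr0 -E; congr (- _); ring.
Qed.

Lemma decomp {R : realType} (A B C A' B' C' A'' B'' C'' : R) : A * B' != A' * B ->
  exists a b c, (forall x y, A''*x + B''*y + C'' =
     a*(A*x+B*y+C) + b*(A'*x+B'*y+C') + c) /\ (A * B'' != A'' * B -> b != 0).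
Proof.
move=> hD; have D0 : A * B' - A' * B != 0 by rewrite subr_eq0.
exists ((A'' * B' - A' * B'') / (A * B' - A' * B)),
  ((A * B'' - A'' * B) / (A * B' - A' * B)),
  (C'' - (A'' * B' - A' * B'') / (A * B' - A' * B) * C
       - (A * B'' - A'' * B) / (A * B' - A' * B) * C').
split; first by move=> x y; field.
by move=> h; rewrite mulf_neq0 ?invr_eq0 // subr_eq0.
Qed.

End Fin.

Theorem lemma4 (R : realType)
  (A1 B1 C1 A2 B2 C2 A3 B3 C3 A4 B4 C4 : R)
  (nz1 : (A1, B1) != (0, 0)) (nz2 : (A2, B2) != (0, 0))
  (nz3 : (A3, B3) != (0, 0)) (nz4 : (A4, B4) != (0, 0))
  (d12 : line A1 B1 C1 <> line A2 B2 C2) (d13 : line A1 B1 C1 <> line A3 B3 C3)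
  (d14 : line A1 B1 C1 <> line A4 B4 C4) (d23 : line A2 B2 C2 <> line A3 B3 C3)
  (d24 : line A2 B2 C2 <> line A4 B4 C4) (d34 : line A3 B3 C3 <> line A4 B4 C4)
  (np12 : ~ parallel A1 B1 A2 B2) (np13 : ~ parallel A1 B1 A3 B3)
  (np23 : ~ parallel A2 B2 A3 B3)
  (np41 : ~ parallel A4 B4 A1 B1) (np42 : ~ parallel A4 B4 A2 B2) :
  let f := linpoly A1 B1 C1 * linpoly A2 B2 C2 * linpoly A3 B3 C3
           + linpoly A4 B4 C4 in
  irreducible2 f /\
  asymptotic_to_line f A1 B1 C1 /\
  asymptotic_to_line f A2 B2 C2 /\
  asymptotic_to_line f A3 B3 C3.
Proof.
move=> f.
have np : forall Ai Bi Aj Bj : R, ~ parallel Ai Bi Aj Bj -> Ai * Bj != Aj * Bi.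
  by move=> Ai Bi Aj Bj h; apply/eqP.
have nps : forall Ai Bi Aj Bj : R, ~ parallel Ai Bi Aj Bj -> Aj * Bi != Ai * Bj.
  by move=> Ai Bi Aj Bj h; apply/eqP => e; apply: h; rewrite /parallel e.
have fE : forall x y, eval2 f x y =
    (A1*x+B1*y+C1) * (A2*x+B2*y+C2) * (A3*x+B3*y+C3) + (A4*x+B4*y+C4).
  by move=> x y; rewrite /f eval2D !eval2M !eval2_lin.
split; first exact: irr_main.
split.
  have [a [b [c [h3 hb]]]] := decomp A1 B1 C1 A2 B2 C2 A3 B3 C3 (np _ _ _ _ np12).
  have [d [e [g [h4 _]]]] := decomp A1 B1 C1 A2 B2 C2 A4 B4 C4 (np _ _ _ _ np12).
  apply: (@branch R A1 B1 C1 A2 B2 C2 a b c d e g f (np _ _ _ _ np12) (hb (np _ _ _ _ np13))).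
  by move=> x y E; rewrite fE h3 h4 -E; ring.
split.
  have [a [b [c [h3 hb]]]] := decomp A2 B2 C2 A1 B1 C1 A3 B3 C3 (nps _ _ _ _ np12).
  have [d [e [g [h4 _]]]] := decomp A2 B2 C2 A1 B1 C1 A4 B4 C4 (nps _ _ _ _ np12).
  apply: (@branch R A2 B2 C2 A1 B1 C1 a b c d e g f (nps _ _ _ _ np12) (hb (np _ _ _ _ np23))).
  by move=> x y E; rewrite fE h3 h4 -E; ring.
have [a [b [c [h2 hb]]]] := decomp A3 B3 C3 A1 B1 C1 A2 B2 C2 (nps _ _ _ _ np13).
have [d [e [g [h4 _]]]] := decomp A3 B3 C3 A1 B1 C1 A4 B4 C4 (nps _ _ _ _ np13).
apply: (@branch R A3 B3 C3 A1 B1 C1 a b c d e g f (nps _ _ _ _ np13) (hb (nps _ _ _ _ np23))).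
by move=> x y E; rewrite fE h2 h4 -E; ring.
Qed.
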